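(* Let $S$ be an infinite set and $\mathcal{F}\subseteq 2^S$ countable, nontrivial, and closed under finite unions and finite intersections. Let $(C,\mathbf{A})$ be a conditional classification problem with $C$ and $S\setminus C$ infinite and $\mathbf{A}=(A_1,\dots,A_k)$ such that $A_i\notin\mathit{cclass}_1(C,\mathcal{F})$ for $1\le i\le k$. Then there exists $\mathbf{B}\le\mathbf{A}$ with $|\mathbf{B}|=k$ and $\mathbf{B}\in\mathit{ccore}_k(C,\mathcal{F})$.
   Context: $\mathcal{F}$ is nontrivial if $\emptyset,S\in\mathcal{F}$ and for all $Q\in\mathcal{F}$ and finite $E\subseteq S$ both $Q\cup E\in\mathcal{F}$ and $Q\setminus E\in\mathcal{F}$. A classification problem is a vector $(A_1,\dots,A_k)$, $k\ge1$, of pairwise disjoint infinite subsets of $S$, of length $k$. A conditional classification problem is a pair $(C,\mathbf{A})$ with $C\subseteq S$, $\mathbf{A}$ a classification problem and $C$ disjoint from all components of $\mathbf{A}$. For vectors $\mathbf{B}=(B_1,\dots,B_m)$, $\mathbf{Q}=(Q_1,\dots,Q_k)$, $\mathbf{B}\le\mathbf{Q}$ means $1\le m\le k$ and there is an injective $\sigma:\{1,\dots,m\}\to\{1,\dots,k\}$ with $B_i\subseteq Q_{\sigma(i)}$. An $\mathcal{F}$-partition is a vector of pairwise disjoint members of $\mathcal{F}$ whose union is $S$. $\mathit{cclass}_k(C,\mathcal{F})$ is the set of classification problems $\mathbf{A}$ of length $k$ such that $(C,\mathbf{A})$ is a conditional classification problem and there is an $\mathcal{F}$-partition $(Q_0,Q_1,\dots,Q_k)$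 with $C\subseteq Q_0$ and $\mathbf{A}\le(Q_1,\dots,Q_k)$ (a single set $A$ is identified with $(A)$). $\mathit{ccore}_k(C,\mathcal{F})$ is the set of classification problems $\mathbf{A}$ of length $k$ with $(C,\mathbf{A})$ a conditional classification problem such that every classification problem $\mathbf{A}'\le\mathbf{A}$ (any length $\ge1$) satisfies $\mathbf{A}'\notin\mathit{cclass}_{|\mathbf{A}'|}(C,\mathcal{F})$. *)

(* Defs.v *)
From HB Require Import structures.
From mathcomp Require Import all_boot all_order.
From mathcomp Require Import boolp classical_sets functions cardinality.

Unset Printing Implicit Defensive.
Local Open Scope classical_set_scope.

(* The ground set S is the whole type S (setT); subsets are [set S]. *)

Definition nontrivial {S : Type} (F : set (set S)) : Prop :=
  F set0 /\ F setT /\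
  (forall Q E : set S, F Q -> finite_set E -> F (Q `|` E) /\ F (Q `\` E)).

(* closure under (binary, hence all nonempty finite) unions and intersections *)
Definition union_inter_closed {S : Type} (F : set (set S)) : Prop :=
  forall Q1 Q2 : set S, F Q1 -> F Q2 -> F (Q1 `|` Q2) /\ F (Q1 `&` Q2).

Definition pairwise_disj {S : Type} {k : nat} (A : 'I_k -> set S) : Prop :=
  forall i j : 'I_k, i != j -> A i `&` A j = set0.

Definition class_problem {S : Type} {k : nat} (A : 'I_k -> set S) : Prop :=
  (1 <= k)%N /\ pairwise_disj A /\ (forall i, infinite_set (A i)).

Definition cond_class_problem {S : Type} {k : nat} (C : set S)
    (A : 'I_k -> set S) : Prop :=
  class_problem A /\ (forall i, C `&` A i = set0).

Definition vle {S : Type} {m k : nat} (B : 'I_m -> set S) (Q : 'I_k -> set S)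
  : Prop :=
  (1 <= m)%N /\ (m <= k)%N /\
  exists sigma : 'I_m -> 'I_k, injective sigma /\ forall i, B i `<=` Q (sigma i).

Definition F_partition {S : Type} {n : nat} (F : set (set S))
    (Q : 'I_n -> set S) : Prop :=
  pairwise_disj Q /\ (forall i, F (Q i)) /\ \bigcup_(i in [set: 'I_n]) Q i = setT.

Definition cclass {S : Type} (k : nat) (C : set S) (F : set (set S))
    (A : 'I_k -> set S) : Prop :=
  cond_class_problem C A /\
  exists Q : 'I_k.+1 -> set S,
    F_partition F Q /\ C `<=` Q ord0 /\ vle A (fun i : 'I_k => Q (lift ord0 i)).

Definition ccore {S : Type} (k : nat) (C : set S) (F : set (set S))
    (A : 'I_k -> set S) : Prop :=
  cond_class_problem C A /\
  forall (m : nat) (A' : 'I_m -> set S),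
    class_problem A' -> vle A' A -> ~ cclass m C F A'.

(* Main.v *)
Require Import Defs.
From HB Require Import structures.
From mathcomp Require Import all_boot all_order.
From mathcomp Require Import boolp classical_sets functions cardinality.
Local Open Scope classical_set_scope.

Definition good {S : Type} (F : set (set S)) (C Q : set S) : Prop :=
  F Q /\ F (~` Q) /\ C `<=` ~` Q.

Lemma good0 {S : Type} (F : set (set S)) C : nontrivial F -> good F C set0.
Proof. by move=> [F0 [FT _]]; split => //; rewrite setC0. Qed.

Lemma goodU {S : Type} (F : set (set S)) C Q1 Q2 : union_inter_closed F ->
  good F C Q1 -> good F C Q2 -> good F C (Q1 `|` Q2).
Proof.
move=> HU [F1 [F1c C1]] [F2 [F2c C2]]; split; first exact: (HU _ _ F1 F2).1.
rewrite setCU; split; first exact: (HU _ _ F1c F2c).2.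
by move=> x Cx; split; [apply: C1|apply: C2].
Qed.

Lemma goodUE {S : Type} (F : set (set S)) C Q E : nontrivial F ->
  good F C Q -> finite_set E -> C `&` E = set0 -> good F C (Q `|` E).
Proof.
move=> [_ [_ HN]] [FQ [FQc CQ]] fE CE; split; first exact: (HN _ _ FQ fE).1.
rewrite setCU -setDE; split; first exact: (HN _ _ FQc fE).2.
move=> x Cx; split; first exact: CQ.
move=> Ex; have : (C `&` E) x by [].
by rewrite CE.
Qed.

Lemma good_enum {S : Type} (F : set (set S)) C : countable F -> nontrivial F ->
  exists e : nat -> set S, (forall n, good F C (e n)) /\
    forall Q, good F C Q -> exists n, e n = Q.
Proof.
move=> /countable_injP [f finj] Hnt.
have H : forall n, exists Q, good F C Q /\
   ((exists Q', good F C Q' /\ f Q' = n) -> f Q = n).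
  move=> n; have [[Q' [gQ' fQ']]|nex] := pselect (exists Q', good F C Q' /\ f Q' = n).
    by exists Q'; split => // _.
  by exists set0; split; [exact: good0|move=> /nex].
have [e He] := choice H.
exists e; split; first by move=> n; exact: (He n).1.
move=> Q gQ; exists (f Q).
have [ge fe] := He (f Q).
apply: finj; rewrite ?inE; [exact: ge.1|exact: gQ.1|].
by apply: fe; exists Q.
Qed.
Fixpoint Ucum {S : Type} (e : nat -> set S) (n : nat) : set S :=
  if n is m.+1 then Ucum e m `|` e n else e 0%N.

Lemma Ucum_good {S : Type} (F : set (set S)) C e : union_inter_closed F ->
  (forall n, good F C (e n)) -> forall n, good F C (Ucum e n).
Proof. by move=> HU ge; elim=> [|n IH] //=; apply: goodU. Qed.

Lemma Ucum_sub {S : Type} (e : nat -> set S) j n : (j <= n)%N -> e j `<=` Ucum e n.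
Proof.
elim: n => [|n IH]; first by rewrite leqn0 => /eqP ->.
rewrite leq_eqVlt => /orP [/eqP ->|]; first by move=> x ex; right.
by rewrite ltnS => /IH sub x /sub; left.
Qed.

Lemma pick_core {S : Type} (F : set (set S)) C A0 : countable F -> nontrivial F ->
  union_inter_closed F -> C `&` A0 = set0 ->
  (forall Q, good F C Q -> ~ (A0 `<=` Q)) ->
  exists b, b `<=` A0 /\ infinite_set b /\ forall Q, good F C Q -> finite_set (b `&` Q).
Proof.
move=> cF Hnt HU CA nsub.
have [e [ge esurj]] := @good_enum S F C cF Hnt.
have gU := @Ucum_good S F C e HU ge.
have H : forall n, exists y, A0 y /\ ~ Ucum e n y.
  move=> n; apply: contrapT => nex; apply: (nsub _ (gU n)) => y Ay.
  apply: contrapT => nU; apply: nex; by exists y.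
have [x Hx] := choice H.
exists (range x); split; first by move=> _ [n _ <-]; exact: (Hx n).1.
split.
  move=> fin.
  have gb : good F C (set0 `|` range x).
    apply: goodUE => //; first exact: good0.
    apply/seteqP; split => // y [Cy [n _ xy]].
    have : (C `&` A0) y by split => //; rewrite -xy; exact: (Hx n).1.
    by rewrite CA.
  have [j ej] := esurj _ gb.
  apply: (Hx j).2; apply: (@Ucum_sub S e j j (leqnn j)); rewrite ej; right; by exists j.
move=> Q gQ; have [j <-] := esurj _ gQ.
apply: (sub_finite_set _ (finite_image x (finite_II j))).
move=> _ [[m _ <-] exm]; exists m => //=.
rewrite /= ltnNge; apply/negP => jm; apply: (Hx m).2.
exact: (@Ucum_sub S e j m jm).
Qed.

Lemma F_seq_union {S : Type} {I : eqType} (F : set (set S)) (f : I -> set S)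
  (P : set I) : nontrivial F -> union_inter_closed F -> (forall l, F (f l)) ->
  forall s : seq I, F (\bigcup_(l in [set l | l \in s /\ P l]) f l).
Proof.
move=> [F0 _] HU Ff; elim=> [|a s IH].
  suff -> : \bigcup_(l in [set l | l \in [::] /\ P l]) f l = set0 by [].
  by apply/seteqP; split => // x [l [] ].
have [Pa|nPa] := pselect (P a).
  suff -> : \bigcup_(l in [set l | l \in a :: s /\ P l]) f l =
    f a `|` \bigcup_(l in [set l | l \in s /\ P l]) f l by exact: (HU _ _ (Ff a) IH).1.
  apply/seteqP; split => x.
    move=> [l [] ] /=; rewrite in_cons => /orP [/eqP ->|ls] Pl fx; first by left.
    by right; exists l.
  by move=> [fx|[l [ls Pl] fx]]; [exists a => //; split => //; rewrite in_cons eqxx|exists l => //; split => //; rewrite in_cons ls orbT].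
suff -> : \bigcup_(l in [set l | l \in a :: s /\ P l]) f l =
    \bigcup_(l in [set l | l \in s /\ P l]) f l by [].
apply/seteqP; split => x.
  move=> [l [] ] /=; rewrite in_cons => /orP [/eqP ->|ls] Pl fx; first by [].
  by exists l.
by move=> [l [ls Pl] fx]; exists l => //; split => //; rewrite in_cons ls orbT.
Qed.

Lemma F_fin_union {S : Type} {I : finType} (F : set (set S)) (f : I -> set S)
  (P : set I) : nontrivial F -> union_inter_closed F -> (forall l, F (f l)) ->
  F (\bigcup_(l in P) f l).
Proof.
move=> Hnt HU Ff.
have := @F_seq_union S I F f P Hnt HU Ff (enum I).
suff -> : [set l | l \in enum I /\ P l] = P by [].
by apply/seteqP; split => l; [case|split => //; rewrite mem_enum].
Qed.

Theorem lemma4p6 (S : Type) (F : set (set S)) :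
  infinite_set [set: S] ->
  countable F -> nontrivial F -> union_inter_closed F ->
  forall (k : nat) (C : set S) (A : 'I_k -> set S),
    cond_class_problem C A ->
    infinite_set C -> infinite_set (~` C) ->
    (forall i : 'I_k, ~ cclass 1 C F (fun _ : 'I_1 => A i)) ->
    exists B : 'I_k -> set S, vle B A /\ ccore k C F B.
Proof.
move=> _ cF Hnt HU k C A [[k1 [dA infA]] CA] _ _ ncl.
have nsub : forall i Q, good F C Q -> ~ A i `<=` Q.
  move=> i Q [FQ [FQc CQ]] AQ; apply: (ncl i); split.
    split; last by move=> _; exact: CA.
    split => //; split; last by move=> _; exact: infA.
    by move=> a b; rewrite (ord1 a) (ord1 b) eqxx.
  exists (fun l : 'I_2 => if l == ord0 then ~` Q else Q); split.
    split.
      move=> [[|[|a]] Ha] [[|[|b]] Hb] //= ab; 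
        by [rewrite setICl|rewrite setICr].
    split; first by move=> [[|[|a]] Ha] //=.
    apply/seteqP; split => // x _.
    have [Qx|nQx] := pselect (Q x).
      by exists (lift ord0 ord0).
    by exists ord0.
  split; first by [].
  split => //; split => //; exists id; split => //.
have Bi : forall i, exists b, b `<=` A i /\ infinite_set b /\
    forall Q, good F C Q -> finite_set (b `&` Q).
  by move=> i; apply: (@pick_core S F C (A i) cF Hnt HU (CA i) (nsub i)).
have [B HB] := choice Bi.
exists B; split.
  split => //; split => //; exists id; split => //; move=> i; exact: (HB i).1.
split.
  split; last first.
    move=> i; apply/seteqP; split => // x [Cx Bx].
    have : (C `&` A i) x by split => //; exact: (HB i).1.
    by rewrite CA.
  split => //; split; last by move=> i; exact: (HB i).2.1.
  move=> a b ab; apply/seteqP; split => // x [Ba Bb].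
  have : (A a `&` A b) x by split; apply: (HB _).1.
  by rewrite dA.
move=> m A' [m1 [dA' infA']] [_ [_ [tau [_ sub']]]]
  [_ [Q' [[dQ [FQ covQ]] [CQ [_ [_ [sig [_ sigsub]]]]]]]].
pose i0 : 'I_m := Ordinal m1.
pose j := lift ord0 (sig i0).
have gQ : good F C (Q' j).
  split; first exact: FQ.
  have eqc : ~` Q' j = \bigcup_(l in [set l | l != j]) Q' l.
    apply/seteqP; split => x.
      move=> nQ; have : [set: S] x by [].
      rewrite -covQ => -[l _ Ql]; exists l => //.
      by apply/negP => /eqP lj; apply: nQ; rewrite -lj.
    move=> [l lj Qx] Qjx; have := dQ l j lj.
    move=> /seteqP [+ _] => /(_ x) H; exact: H.
  split; first by rewrite eqc; exact: F_fin_union.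
  move=> x Cx Qjx; have := dQ ord0 j (neq_lift ord0 _).
  move=> /seteqP [+ _] => /(_ x) H; apply: H; split => //; exact: CQ.
have fin := (HB (tau i0)).2.2 _ gQ.
apply: (infA' i0); apply: sub_finite_set fin.
move=> x A'x; split; [exact: sub' | exact: sigsub].
Qed.
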